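(* Let $H$ be a finite simple graph with $n=|V(H)|\ge 1$ vertices, chromatic number $\chi=\chi(H)$, and let $m'=m'(H)$ denote the number of non-edges of $H$. Then $$\left\lceil \frac{n}{\chi} \right\rceil \left( n - \frac{\chi}{2}\left\lceil\frac{n}{\chi}-1\right\rceil\right) \leq \rho(H) \leq n+m'.$$
   Context: All graphs are finite and simple. A coloring of a graph means a proper vertex coloring. An induced subgraph is rainbow if all its vertices receive pairwise different colors. For a graph $H$, $\rho(H)$ is the least number $m$ such that there exists a graph $G$ on $m$ vertices with the property that every proper vertex coloring of $G$ contains a rainbow induced subgraph isomorphic to $H$. A non-edge of $H$ is an unordered pair of distinct non-adjacent vertices of $H$. *)

(* Defs.v *)
From mathcomp Require Import all_boot all_order all_algebra.
Set Implicit Arguments. Unset Strict Implicit. Unset Printing Implicit Defensive.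

Definition simple_graph (T : finType) (e : rel T) : Prop :=
  (forall x, ~~ e x x) /\ (forall x y, e x y = e y x).

Definition proper_kcoloring (T : finType) (e : rel T) (k : nat) (c : T -> 'I_k) :=
  forall x y, e x y -> c x != c y.

Definition is_chromatic_number (T : finType) (e : rel T) (chi : nat) : Prop :=
  (exists c : T -> 'I_chi, proper_kcoloring e c) /\
  (forall k (c : T -> 'I_k), proper_kcoloring e c -> chi <= k).

Definition num_nonedges (T : finType) (e : rel T) : nat :=
  #|[set A : {set T} | (#|A| == 2) && [forall u in A, forall v in A, ~~ e u v]]|.

Definition proper_coloring (V : finType) (e : rel V) (c : V -> nat) :=
  forall x y, e x y -> c x != c y.

Definition has_rainbow_induced_copy (T V : finType) (eH : rel T) (eG : rel V)
  (c : V -> nat) : Prop :=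
  exists f : T -> V, injective f /\
    (forall u v, eG (f u) (f v) = eH u v) /\
    injective (fun u => c (f u)).

Definition rho_witness (T : finType) (eH : rel T) (m : nat) : Prop :=
  exists eG : rel 'I_m, simple_graph eG /\
    forall c : 'I_m -> nat, proper_coloring eG c -> has_rainbow_induced_copy eH eG c.

Definition is_rho (T : finType) (eH : rel T) (r : nat) : Prop :=
  rho_witness eH r /\ forall m, rho_witness eH m -> r <= m.

(* Main.v *)
Require Import Defs.
From mathcomp Require Import all_boot all_order all_algebra zify lra.
From Stdlib Require Import Classical.
Set Implicit Arguments. Unset Strict Implicit. Unset Printing Implicit Defensive.

Definition rlt (T : finType) (u v : T) := (enum_rank u < enum_rank v)%N.
Definition Pv (T : finType) (eH : rel T) (p : T * T) :=
  (p.1 == p.2) || (rlt p.2 p.1 && ~~ eH p.1 p.2).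
Notation Vt eH := {p : _ * _ | Pv eH p}.
Definition eVt (T : finType) (eH : rel T) : rel (Vt eH) := fun x y =>
  (((val x).1 == (val y).1) && ((val x).2 != (val y).2)) || eH (val x).1 (val y).1.

Lemma greedy (T : finType) (eH : rel T) (c : Vt eH -> nat) :
  simple_graph eH -> proper_coloring (@eVt T eH) c ->
  forall k, (k <= #|T|)%N -> exists g : T -> Vt eH, (forall v, (val (g v)).1 = v) /\
   forall u v, (enum_rank u < k)%N -> (enum_rank v < k)%N -> u != v -> c (g u) != c (g v).
Proof.
move=> [irr sym] pc; elim=> [|k IH] hk.
  have P0 : forall v : T, Pv eH (v, v) by move=> v; rewrite /Pv eqxx.
  by exists (fun v => exist _ (v, v) (P0 v)).
have [g [g1 gp]] := IH (ltnW hk).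
pose v0 : T := enum_val (Ordinal hk : 'I_#|T|).
have rv0 : enum_rank v0 = Ordinal hk :> 'I_#|T| by rewrite /v0 enum_valK.
pose A := [set x : Vt eH | (val x).1 == v0].
pose N := [set u | rlt u v0 && ~~ eH v0 u].
pose Fb := g @: N.
have NA : (#|N| + 1 <= #|A|)%N.
  have : v0 |: N \subset [set (val x).2 | x in A].
    apply/subsetP => u; rewrite !inE => /orP [/eqP ->|Nu].
      have P : Pv eH (v0, v0) by rewrite /Pv eqxx.
      by apply/imsetP; exists (exist _ (v0, v0) P); rewrite // inE.
    have P : Pv eH (v0, u) by rewrite /Pv /= Nu orbT.
    by apply/imsetP; exists (exist _ (v0, u) P); rewrite // inE.
  move/subset_leq_card; rewrite cardsU1 inE /rlt ltnn /= add1n addn1 => h.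
  exact: leq_trans h (leq_imset_card _ _).
have Ainj : {in A &, injective c}.
  move=> [[a b] Pa] [[a' b'] Pb]; rewrite !inE /= => /eqP x1 /eqP y1 E.
  subst a a'; apply/eqP; apply/negPn/negP => nxy.
  have : eVt (exist _ (v0, b) Pa) (exist _ (v0, b') Pb).
    rewrite /eVt /= eqxx /=; apply/orP; left; apply: contra nxy => /eqP bb.
    by apply/eqP; apply: val_inj; rewrite /= bb.
  by move/pc; rewrite E eqxx.
have [x xA xN] : exists2 x, x \in A & forall u, u \in N -> c x != c (g u).
  suff /exists_inP [x xA /forall_inP xN] : [exists x in A, [forall u in N, c x != c (g u)]].
    by exists x.
  apply: contraT => /exists_inPn H.
  have : (size (map c (enum A)) <= size (map c (enum Fb)))%N.
    apply: uniq_leq_size; first by rewrite map_inj_in_uniq ?enum_uniq // => a b; rewrite !mem_enum; apply: Ainj.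
    move=> z /mapP [a]; rewrite mem_enum => aA ->.
    have := H a aA; move=> /forall_inPn [u uN]; rewrite negbK => /eqP cu.
    by rewrite cu; apply: map_f; rewrite mem_enum; apply: imset_f.
  rewrite !size_map -!cardE; have := leq_imset_card g N; move=> h1 h2.
  move: h2; rewrite /Fb; lia.
have x1 : (val x).1 = v0 by move: xA; rewrite inE => /eqP.
pose g' := fun u => if u == v0 then x else g u.
have rk : forall u, (enum_rank u < k.+1)%N -> u != v0 -> (enum_rank u < k)%N.
  move=> u; rewrite ltnS leq_eqVlt => /orP [/eqP E|//] /eqP []. 
  apply: enum_rank_inj; apply: val_inj; by rewrite rv0 /= E.
have adj : forall u, (enum_rank u < k)%N -> c x != c (g u).
  move=> u uk; case: (boolP (eH v0 u)) => e.
    apply: pc; rewrite /eVt x1 g1 e orbT //.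
  apply: xN; rewrite inE e andbT /rlt rv0 //.
exists g'; split.
  by move=> v; rewrite /g'; case: (v =P v0) => [->|_]; [exact: x1 | exact: g1].
move=> u v uk vk nuv; rewrite /g'.
case: (u =P v0) => [eu|/eqP nu]; case: (v =P v0) => [ev|/eqP nv].
- by move: nuv; rewrite eu ev eqxx.
- exact: adj (rk _ vk nv).
- by rewrite eq_sym; exact: adj (rk _ uk nu).
- exact: gp (rk _ uk nu) (rk _ vk nv) nuv.
Qed.

Lemma Vt_card (T : finType) (eH : rel T) : simple_graph eH ->
  (#|{: Vt eH}| <= #|T| + num_nonedges eH)%N.
Proof.
move=> [irr sym].
pose D := [set x : Vt eH | (val x).1 == (val x).2].
rewrite -[#|{: Vt eH}|]cardsT -(cardsID D [set: Vt eH]) setTI.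
apply: leq_add.
  rewrite -(@card_in_imset _ _ (fun x : Vt eH => (val x).1) D); first exact: max_card.
  move=> [[a b] Pa] [[a' b'] Pb]; rewrite !inE /= => /eqP ab /eqP ab' E.
  by apply: val_inj; rewrite /= -ab -ab' E.
pose h := fun x : Vt eH => [set (val x).1; (val x).2].
have Hnd : forall x : Vt eH, x \in [set: Vt eH] :\: D -> (rlt (val x).2 (val x).1 && ~~ eH (val x).1 (val x).2).
  move=> [[a b] Pa]; rewrite !inE /= andbT => nab.
  by move: Pa; rewrite /Pv /= (negbTE nab).
rewrite -(@card_in_imset _ _ h); last first.
  move=> x y /Hnd /andP [lx _] /Hnd /andP [ly _].
  move: lx ly; case: x => [[a b] Pa]; case: y => [[a' b'] Pb] /= lx ly E.
  apply: val_inj => /=; move: E; rewrite /h /= => E.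
  have ia : a \in [set a'; b'] by rewrite -E !inE eqxx.
  have ib : b \in [set a'; b'] by rewrite -E !inE eqxx orbT.
  have ia' : a' \in [set a; b] by rewrite E !inE eqxx.
  move: ia ib ia' lx ly; rewrite !inE /rlt.
  case/orP => /eqP ea; case/orP => /eqP eb; case/orP => /eqP ea'; subst => //; 
    rewrite ?ltnn //; try (move=> h1 h2; lia).
apply: subset_leq_card; apply/subsetP => S /imsetP [x /Hnd /andP [l ne] ->].
rewrite inE /h cards2; apply/andP; split.
  have -> // : (val x).1 != (val x).2 by apply/negP => /eqP E; move: l; rewrite /rlt E ltnn.
apply/forallP => u; apply/implyP; rewrite !inE => /orP [] /eqP ->;
apply/forallP => v; apply/implyP; rewrite !inE => /orP [] /eqP -> //; by rewrite sym.
Qed.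
Lemma transport (T V : finType) (eH : rel T) (eV : rel V) (m : nat) :
  (forall x, ~~ eV x x) -> (forall x y, eV x y = eV y x) ->
  (forall c : V -> nat, proper_coloring eV c -> has_rainbow_induced_copy eH eV c) ->
  (#|V| <= m)%N -> rho_witness eH m.
Proof.
move=> irr sym H hm.
pose g : V -> 'I_m := fun v => widen_ord hm (enum_rank v).
have ginj : injective g.
  by move=> a b /(congr1 val) /= /val_inj /enum_rank_inj.
pose eG : rel 'I_m := fun i j => [exists v, [exists w, (g v == i) && (g w == j) && eV v w]].
have key : forall a b, eG (g a) (g b) = eV a b.
  move=> a b; apply/existsP/idP => [[v /existsP [w /andP [/andP [/eqP /ginj -> /eqP /ginj ->] //]]]|e].
  by exists a; apply/existsP; exists b; rewrite !eqxx.
exists eG; split.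
  split.
  - move=> i; apply/negP => /existsP [v /existsP [w /andP [/andP [/eqP E1 /eqP E2] e]]].
    by move: e; rewrite (ginj v w) ?(negbTE (irr w)) // E1 E2.
  - move=> i j; apply/existsP/existsP => -[v /existsP [w /andP [/andP [E1 E2] e]]];
    by exists w; apply/existsP; exists v; rewrite E1 E2 sym e.
move=> c pc.
have [|f [finj [fe fr]]] := H (fun v => c (g v)).
  by move=> x y e; apply: pc; rewrite key.
exists (fun u => g (f u)); split; last split.
- by move=> u v /ginj /finj.
- by move=> u v; rewrite key fe.
- exact: fr.
Qed.

Lemma upper (T : finType) (eH : rel T) : simple_graph eH ->
  rho_witness eH (#|T| + num_nonedges eH).
Proof.
move=> sg; have [irr sym] := sg.
apply: (@transport T _ eH (@eVt T eH)).
- move=> x; rewrite /eVt eqxx /= (negbTE (irr _)) orbF; apply/negP => /eqP; by [].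
- move=> x y; rewrite /eVt sym; congr orb; by rewrite eq_sym [_.2 == _]eq_sym.
- move=> c pc.
  have [g [g1 gp]] := greedy sg pc (leqnn #|T|).
  exists g; split; last split.
  + by move=> u v E; rewrite -(g1 u) -(g1 v) E.
  + move=> u v; rewrite /eVt !g1.
    case: (u =P v) => [->|/eqP nuv] /=; last by [].
    by rewrite eqxx (negbTE (irr _)).
  + move=> u v E; apply/eqP; apply: contraT => nuv.
    by move: (gp u v (ltn_ord _) (ltn_ord _) nuv); rewrite E eqxx.
- exact: Vt_card.
Qed.
Lemma lt_mul_cancel (c a b : nat) : (0 < c)%N -> (c * a < c * b)%N -> (a < b)%N.
Proof. by move=> c0; rewrite ltn_pmul2l. Qed.
Lemma arith (chi j q q' a u : nat) : (0<chi)%N -> (j <= chi*q)%N -> (chi*q < j+chi)%N ->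
  (j+1 <= chi*q')%N -> (chi*q' < j+1+chi)%N -> (j+1 <= chi*a)%N ->
  (2*q*j+chi*q <= 2*u + chi*q*q)%N -> (2*q'*(j+1) + chi*q' <= 2*(a+u) + chi*q'*q')%N.
Proof.
move=> c0 h1 h2 h3 h4 h5 IH.
have qa : (q' <= a)%N.
  have : (chi * q' < chi * a.+1)%N by rewrite mulnS; lia.
  by apply: lt_mul_cancel.
have qq1 : (q' <= q.+1)%N.
  have : (chi * q' < chi * q.+2)%N by rewrite !mulnS; lia.
  by apply: lt_mul_cancel.
have qq2 : (q <= q')%N.
  have : (chi * q < chi * q'.+1)%N by rewrite !mulnS; lia.
  by apply: lt_mul_cancel.
have [->|ne] := eqVneq q' q; first by nia.
have -> : q' = q.+1 by lia.
nia.
Qed.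
Lemma q_exists (chi j : nat) : (0 < chi)%N -> exists q, (j <= chi*q)%N /\ (chi*q < j+chi)%N.
Proof.
move=> c0; elim: j => [|j [q [h1 h2]]]; first by exists 0; lia.
have [le|lt] := leqP j.+1 (chi*q); first by exists q; lia.
by exists q.+1; rewrite mulnS; lia.
Qed.

Lemma pigeon (T : finType) (k : nat) (kap : T -> 'I_k) (W : {set T}) :
  (0 < k)%N -> exists a : 'I_k, (#|W| <= k * #|[set w in W | kap w == a]|)%N.
Proof.
move=> k0.
pose F a := #|[set w in W | kap w == a]|.
pose am := [arg max_(a > Ordinal k0) F a].
exists am.
have -> : #|W| = \sum_(a < k) F a.
  rewrite -sum1_card (partition_big kap xpredT) //=.
  apply: eq_bigr => a _; rewrite /F -sum1_card; apply: eq_bigl => w.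
  by rewrite inE.
have H : forall a, (F a <= F am)%N.
  move=> a; rewrite /am; case: arg_maxnP => // i _ Hi; exact: Hi.
apply: (@leq_trans (\sum_(a < k) F am)); first exact: leq_sum.
by rewrite sum_nat_const card_ord.
Qed.

Definition indep (V : finType) (eV : rel V) (S : {set V}) :=
  [forall x in S, forall y in S, ~~ eV x y].

Definition good (T V : finType) (eH : rel T) (eV : rel V) (U : {set V}) (j : nat) :=
  forall c : V -> nat, (forall x y, x \in U -> y \in U -> eV x y -> c x != c y) ->
  exists W : {set T}, exists f : T -> V, (j <= #|W|)%N /\ {in W, forall w, f w \in U} /\
    {in W &, forall u v, eV (f u) (f v) = eH u v} /\ {in W &, injective (fun w => c (f w))}.

Lemma indep_bound (T V : finType) (eH : rel T) (eV : rel V) (chi : nat) (kap : T -> 'I_chi)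
  (U : {set V}) (j : nat) :
  (forall x y, eH x y -> kap x != kap y) -> (0 < chi)%N -> (forall x, ~~ eV x x) ->
  good eH eV U j -> exists S : {set V}, S \subset U /\ indep eV S /\ (j <= chi * #|S|)%N.
Proof.
move=> kp c0 irr g.
have [|W [f [jW [fU [fe finj]]]]] := g (fun x => val (enum_rank x)).
  move=> x y _ _ exy; apply/negP => /eqP /val_inj /enum_rank_inj E.
  by move: exy; rewrite E (negbTE (irr y)).
have [a Ha] := pigeon kap W c0.
set Wa := [set w in W | kap w == a] in Ha.
have WaW : Wa \subset W by apply/subsetP => w; rewrite inE => /andP[].
exists (f @: Wa); split; last split.
- apply/subsetP => x /imsetP [w wW ->]; apply: fU; exact: (subsetP WaW).
- apply/forallP => x; apply/implyP => /imsetP [u uW ->].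
  apply/forallP => y; apply/implyP => /imsetP [v vW ->].
  rewrite fe; try exact: (subsetP WaW).
  apply/negP => /kp; move: uW vW; rewrite !inE => /andP[_ /eqP ->] /andP[_ /eqP ->].
  by rewrite eqxx.
- rewrite card_in_imset; first exact: leq_trans jW Ha.
  move=> u v uW vW E; apply: finj; try exact: (subsetP WaW).
  by rewrite /= E.
Qed.

Lemma lower_ind (T V : finType) (eH : rel T) (eV : rel V) (chi : nat) (kap : T -> 'I_chi) :
  (forall x y, eH x y -> kap x != kap y) -> (0 < chi)%N -> (forall x, ~~ eV x x) ->
  forall j (U : {set V}) q, good eH eV U j -> (j <= chi*q)%N -> (chi*q < j+chi)%N ->
  (2*q*j + chi*q <= 2*#|U| + chi*q*q)%N.
Proof.
move=> kp c0 irr; elim=> [|j IH] U q' g h1 h2.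
  have -> : q' = 0.
    case: q' h2 {h1} => // q'; rewrite add0n mulnS; lia.
  lia.
have [S [SU [Si Sj]]] := indep_bound kp c0 irr g.
pose P := fun S : {set V} => (S \subset U) && indep eV S.
have P0 : P set0 by rewrite /P sub0set; apply/forallP => x; rewrite inE.
pose I := [arg max_(S > set0 | P S) #|S|].
have [II IS] : P I /\ forall S, P S -> (#|S| <= #|I|)%N.
  rewrite /I; case: arg_maxnP => // i Pi Hi; split => // S0 PS0; exact: Hi.
move: II => /andP [IU Ii].
have gU' : good eH eV (U :\: I) j.
  move=> c Hc.
  pose c' := fun x => if x \in I then 0 else (c x).+1.
  have [|W [f [jW [fU [fe finj]]]]] := g c'.
    move=> x y xU yU exy; rewrite /c'.
    case: ifP => xI; case: ifP => yI //.
    - by move: Ii => /forallP /(_ x) /implyP /(_ xI) /forallP /(_ y) /implyP /(_ yI); rewrite exy.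
    - rewrite eqSS; apply: Hc => //; rewrite inE ?xI ?yI //.
  exists (W :\: f @^-1: I), f; split; last split; last split.
  - have : #|W :&: f @^-1: I| <= 1.
      apply/card_le1_eqP => x y; rewrite !inE => /andP [xW xI] /andP [yW yI].
      by apply: finj => //=; rewrite /c' xI yI.
    move: jW; rewrite -(cardsID (f @^-1: I) W); lia.
  - move=> w; rewrite !inE => /andP [fI wW]; rewrite fI /=; exact: fU.
  - move=> u v; rewrite !inE => /andP [_ uW] /andP [_ vW]; exact: fe.
  - move=> u v; rewrite !inE => /andP [uI uW] /andP [vI vW] E.
    by apply: finj => //=; rewrite /c' (negbTE uI) (negbTE vI) E.
have [q [q1 q2]] := q_exists j c0.
have := IH _ _ gU' q1 q2.
have SI : (#|S| <= #|I|)%N by apply: IS; rewrite /P SU.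
have cU : #|U| = #|I| + #|U :\: I|.
  by rewrite -(cardsID I U) (setIidPr IU).
rewrite cU => H.
have := arith c0 q1 q2 (q':=q') (a:=#|I|) _ _ _ H. rewrite !addn1 => ->; try lia.
by apply: leq_trans Sj _; rewrite leq_mul2l SI orbT.
Qed.
Import Order.TTheory GRing.Theory Num.Theory.
Local Open Scope ring_scope.
Lemma final_arith (n chi q r : nat) : (0 < chi)%N -> (n <= chi*q)%N -> (chi*q < n+chi)%N ->
  (2*q*n + chi*q <= 2*r + chi*q*q)%N ->
    ((Num.ceil ((n%:R : rat) / chi%:R))%:~R * (n%:R - chi%:R / 2 * (Num.ceil ((n%:R : rat) / chi%:R - 1))%:~R) <= r%:R :> rat).
Proof.
move=> c0 h1 h2 h3.
set n' : rat := n%:R; set x : rat := chi%:R.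
have x0 : 0 < x by rewrite /x ltr0n.
have H1 : n' <= x * q%:R by rewrite /n' /x -natrM ler_nat.
have H2 : x * q%:R < n' + x by rewrite /n' /x -natrM -natrD ltr_nat.
have H3 : 2 * q%:R * n' + x * q%:R <= 2 * r%:R + x * q%:R * q%:R :> rat.
  by rewrite /n' /x -!natrM -!natrD ler_nat.
have Hy2 : n' / x <= q%:R by rewrite ler_pdivrMr // mulrC.
have Hy1 : q%:R - 1 < n' / x by rewrite ltr_pdivlMr // mulrBl mul1r mulrC; lra.
have -> : Num.ceil (n' / x) = q%:Z.
  apply: ceil_def; apply/andP; split.
  - by rewrite intrB (_ : (q%:Z)%:~R = q%:R) //.
  - by rewrite (_ : (q%:Z)%:~R = q%:R) //.
have -> : Num.ceil (n' / x - 1) = q%:Z - 1.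
  apply: ceil_def; rewrite !intrB (_ : (q%:Z)%:~R = q%:R) //; apply/andP; split; lra.
rewrite intrB (_ : (q%:Z)%:~R = q%:R) //.
nra.
Qed.

Lemma min_exists (P : nat -> Prop) (M0 : nat) : P M0 -> exists r, P r /\ forall m, P m -> (r <= m)%N.
Proof.
elim: M0.+1 {-2}M0 (ltnSn M0) => // N IH M HM PM.
case: (classic (exists m, (m < M)%N /\ P m)) => [[m [mM Pm]]|nex].
- apply: (IH m) => //; lia.
- exists M; split => // m Pm; rewrite leqNgt; apply/negP => mM; apply: nex; by exists m.
Qed.

Theorem theorem1p1 (T : finType) (eH : rel T) (chi : nat) :
  simple_graph eH -> (1 <= #|T|)%N -> is_chromatic_number eH chi ->
  exists r : nat, is_rho eH r /\
    let n : rat := (#|T|)%:R in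
    let x : rat := chi%:R in
    ((Num.ceil (n / x))%:~R * (n - x / 2 * (Num.ceil (n / x - 1))%:~R) <= r%:R)
    /\ (r <= #|T| + num_nonedges eH)%N.
Proof.
move=> sg n1 [[kap kp] kmin].
have [t0 _] : exists t : T, t \in T by apply/card_gt0P.
have c0 : (0 < chi)%N by apply: leq_ltn_trans (ltn_ord (kap t0)).
have [r [[eG [sgG wG]] rmin]] := min_exists (upper sg).
exists r; split; first by split; [exists eG|].
move=> n0 x0; split; last exact: rmin _ (upper sg).
have [q [q1 q2]] := q_exists #|T| c0.
have gd : good eH eG [set: 'I_r] #|T|.
  move=> c Hc.
  have [f [finj [fe fr]]] := wG c (fun x y e => Hc x y (in_setT _) (in_setT _) e).
  exists [set: T], f; split; first by rewrite cardsT.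
  split; first by move=> w _; rewrite in_setT.
  split; first by move=> u v _ _; exact: fe.
  by move=> u v _ _; exact: fr.
have := lower_ind kp c0 sgG.1 gd q1 q2; rewrite cardsT card_ord => H.
exact: final_arith c0 q1 q2 H.
Qed.
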